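(* Consider the full-duplex (FD) two-stage relay selection (TRS) scheme described in the context, with $\varpi=1$, thresholds $\gamma_{th_j}=2^{R_{D_j}}-1$ for $j=1,2$, and power coefficients satisfying $0<a_1<a_2$, $a_1+a_2=1$, $a_2>a_1\gamma_{th_2}$. Then its diversity order is zero: $$-\lim_{\rho\to\infty}\frac{\log P_{TRS}^{FD}(\rho)}{\log\rho}=0 .$$
   Context: Network model. A base station (BS) is at the origin of the plane. There are $K\ge 1$ relays $R_1,\dots,R_K$ whose positions are i.i.d. uniformly distributed in the disc of radius $R_{\mathcal D}>0$ centred at the origin; $d_{SR_i}$ is the distance from the BS to $R_i$. Two users $D_1,D_2$ are at fixed points of the plane at distances $d_1,d_2>0$ from the BS, and $d_{R_iD_j}$ is the Euclidean distance between $R_i$ and $D_j$. Let $\alpha>0$ be the path loss exponent. The random variables $g_{SR_i}$, $g_{R_iD_1}$, $g_{R_iD_2}$ ($i=1,\dots,K$) are exponentially distributed with mean $1$ (squared magnitudes of $\mathcal{CN}(0,1)$ Rayleigh coefficients), $Z_i$ is exponentially distributed with mean $\Omega_{LI}>0$ (loop-interference gain at $R_i$), and all of these are mutually independent and independent of the relay positions. Put $X_i=g_{SR_i}/(1+d_{SR_i}^\alpha)$ and $Y_{ji}=g_{R_iD_j}/(1+d_{R_iD_j}^\alpha)$. Let $\rho>0$ be the transmit SNR, $a_1,a_2$ power allocation coefficients, and $\varpi\in\{0,1\}$ the duplex factor. Define $\gamma_{D_2\to R_i}=\frac{\rho X_i a_2}{\rho X_i a_1+\rho\varpi Z_i+1}$,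 $\gamma_{D_1\to R_i}=\frac{\rho X_i a_1}{\rho\varpi Z_i+1}$, $\gamma^{(i)}_{D_2\to D_1}=\frac{\rho Y_{1i}a_2}{\rho Y_{1i}a_1+1}$, $\gamma^{(i)}_{D_1}=\rho Y_{1i}a_1$, $\gamma^{(i)}_{D_2}=\frac{\rho Y_{2i}a_2}{\rho Y_{2i}a_1+1}$. Target rates $R_{D_1},R_{D_2}>0$ are given; in FD mode $\varpi=1$ and $\gamma_{th_j}=2^{R_{D_j}}-1$. TRS scheme: let $S=\{i: \gamma_{D_2\to R_i}\ge\gamma_{th_2},\ \gamma^{(i)}_{D_2\to D_1}\ge\gamma_{th_2},\ \gamma^{(i)}_{D_2}\ge\gamma_{th_2}\}$. The outage event is that either $S=\emptyset$, or $S\neq\emptyset$ and $\max_{i\in S}\min\{\gamma_{D_1\to R_i},\gamma^{(i)}_{D_1}\}<\gamma_{th_1}$; $P_{TRS}(\rho)$ is its probability, and $P_{TRS}^{FD}$ denotes it in FD mode. *)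

(* Defs.v *)
From HB Require Import structures.
From mathcomp Require Import all_boot all_order all_algebra.
From mathcomp Require Import all_classical all_reals all_analysis.
Set Implicit Arguments. Unset Strict Implicit. Unset Printing Implicit Defensive.
Import Order.TTheory GRing.Theory Num.Theory.
Import numFieldNormedType.Exports.
Local Open Scope classical_set_scope.
Local Open Scope ring_scope.

(** Mutual independence of a finite family of classes of events:
    for every choice of one event per class, the probability of the
    intersection is the product of the probabilities (taking [setT]
    in some classes gives the product rule for every subfamily). *)
Definition indep_classes (R : realType) (d : measure_display)
  (T : measurableType d) (P : probability T R) (J : finType)
  (E : J -> set (set T)) : Prop :=
  forall A : J -> set T, (forall j, E j (A j)) ->
    P (\bigcap_(j in [set: J]) A j) = (\prod_(j : J) P (A j))%E.

Definition events_of (R : realType) (d : measure_display) (T : measurableType d)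
  (X : T -> R) : set (set T) :=
  [set X @^-1` B | B in [set B : set R | measurable B]].

Definition events_of2 (R : realType) (d : measure_display) (T : measurableType d)
  (X Y : T -> R) : set (set T) :=
  [set (fun w => (X w, Y w)) @^-1` B | B in [set B : set (R * R) | measurable B]].

Definition exponential_mean (R : realType) (d : measure_display)
  (T : measurableType d) (P : probability T R) (m : R) (X : T -> R) : Prop :=
  forall t : R, P [set w | t < X w] = (if 0 <= t then expR (- t / m) else 1)%:E.

Definition disc (R : realType) (r : R) : set (R * R) :=
  [set p | p.1 ^+ 2 + p.2 ^+ 2 <= r ^+ 2].

Definition uniform_disc (R : realType) (d : measure_display)
  (T : measurableType d) (P : probability T R) (r : R) (X Y : T -> R) : Prop :=
  forall B : set (R * R), measurable B ->
    P ((fun w => (X w, Y w)) @^-1` B) =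
    ((lebesgue_measure \x lebesgue_measure) (B `&` disc r)
       * ((pi * r ^+ 2)^-1)%:E)%E.

Definition dist2 (R : realType) (p q : R * R) : R :=
  Num.sqrt ((p.1 - q.1) ^+ 2 + (p.2 - q.2) ^+ 2).

Definition gain (R : realType) (alpha g dd : R) : R := g / (1 + dd `^ alpha).

(** SINRs of the FD/HD TRS scheme (varpi is the duplex factor) *)
Definition g_D2_R (R : realType) (rho a1 a2 varpi X Z : R) : R :=
  rho * X * a2 / (rho * X * a1 + rho * varpi * Z + 1).
Definition g_D1_R (R : realType) (rho a1 varpi X Z : R) : R :=
  rho * X * a1 / (rho * varpi * Z + 1).
Definition g_D2_D1 (R : realType) (rho a1 a2 Y1 : R) : R :=
  rho * Y1 * a2 / (rho * Y1 * a1 + 1).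
Definition g_D1 (R : realType) (rho a1 Y1 : R) : R := rho * Y1 * a1.
Definition g_D2 (R : realType) (rho a1 a2 Y2 : R) : R :=
  rho * Y2 * a2 / (rho * Y2 * a1 + 1).

Definition TRS_outage (R : realType) (K : nat) (rho a1 a2 varpi th1 th2 : R)
  (X Y1 Y2 Z : 'I_K -> R) : Prop :=
  let S := [set i : 'I_K | [&& th2 <= g_D2_R rho a1 a2 varpi (X i) (Z i),
                              th2 <= g_D2_D1 rho a1 a2 (Y1 i)
                            & th2 <= g_D2 rho a1 a2 (Y2 i)]] in
  S = set0 \/
  (S != set0 /\
   \big[Num.max/0]_(i in S)
      Num.min (g_D1_R rho a1 varpi (X i) (Z i)) (g_D1 rho a1 (Y1 i)) < th1).

(* Main.v *)
Require Import Defs.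
From HB Require Import structures.
From mathcomp Require Import all_boot all_order all_algebra.
From mathcomp Require Import all_classical all_reals all_analysis.
From mathcomp Require Import measurable_realfun.
From mathcomp Require Import ring lra.
Import Order.TTheory GRing.Theory Num.Theory.
Import numFieldNormedType.Exports.
Local Open Scope classical_set_scope.
Local Open Scope ring_scope.

Lemma inv_meas (R : realType) : measurable_fun [set: R] (@GRing.inv R).
Proof.
have -> : [set: R] = ~` [set 0] `|` [set 0].
  by rewrite setvU.
apply/measurable_funU.
- by apply: measurableC.
- by [].
split; last exact: measurable_fun_set1.
apply: open_continuous_measurable_fun.
  by apply/closed_openC/accessible_closed_set1/hausdorff_accessible/(@Rhausdorff R).
move=> x; rewrite inE /= => /eqP x0.
by apply: inv_continuous.
Qed.

Lemma bigmax_lt_iff (R : realType) (I : finType) (S : pred I) (F : I -> R) (t : R) :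
  0 < t -> (\big[Num.max/0]_(i | S i) F i < t) <-> (forall i, S i -> F i < t).
Proof.
move=> t0; split.
- move=> H i iS; apply: le_lt_trans H.
  rewrite (bigD1 i) //=; by rewrite le_max lexx.
- move=> H; elim/big_ind: _ => //.
  + by move=> x y xt yt; rewrite gt_max xt yt.
Qed.


Definition okb (R : realType) (rho a1 a2 varpi th1 th2 x y1 y2 z : R) : bool :=
  ~~ [&& th2 <= g_D2_R rho a1 a2 varpi x z, th2 <= g_D2_D1 rho a1 a2 y1
       & th2 <= g_D2 rho a1 a2 y2]
  || (Num.min (g_D1_R rho a1 varpi x z) (g_D1 rho a1 y1) < th1).

Arguments okb {R}.

Lemma outage_iff (R : realType) (K : nat) (rho a1 a2 varpi th1 th2 : R)
  (X Y1 Y2 Z : 'I_K -> R) : 0 < th1 ->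
  TRS_outage rho a1 a2 varpi th1 th2 X Y1 Y2 Z <->
  forall i, okb rho a1 a2 varpi th1 th2 (X i) (Y1 i) (Y2 i) (Z i).
Proof.
move=> th1p; rewrite /TRS_outage /okb.
set S := [set i | _].
have memS i : (i \in S) = [&& th2 <= g_D2_R rho a1 a2 varpi (X i) (Z i),
      th2 <= g_D2_D1 rho a1 a2 (Y1 i) & th2 <= g_D2 rho a1 a2 (Y2 i)].
  by apply/idP/idP => [/set_mem|H]; [done | exact/mem_set].
split.
- case=> [S0|[_ H]] i.
  + case: (boolP (i \in S)) => iS; last by rewrite -memS iS.
    by move: iS => /set_mem; rewrite S0.
  + case: (boolP (i \in S)) => iS; last by rewrite -memS iS.
    by rewrite -memS iS /=; apply: ((@bigmax_lt_iff _ _ (fun j => j \in S) _ _ th1p).1 H).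
- move=> H; case: (eqVneq S set0) => [S0|Sn0]; [by left|right; split => //].
  apply/(@bigmax_lt_iff _ _ (fun j => j \in S) _ _ th1p) => i iS.
  by move: (H i); rewrite -memS iS.
Qed.

Lemma inv_comp_meas (R : realType) (d : measure_display) (T : measurableType d)
  (D : set T) (f : T -> R) : measurable_fun D f -> measurable_fun D (fun w => (f w)^-1).
Proof. move=> mf; exact: (measurableT_comp (inv_meas R) mf). Qed.

Lemma sqrt_comp_meas (R : realType) (d : measure_display) (T : measurableType d)
  (D : set T) (f : T -> R) : measurable_fun D f -> measurable_fun D (fun w => Num.sqrt (f w)).
Proof. move=> mf; exact: (measurableT_comp (continuous_measurable_fun (@sqrt_continuous R)) mf). Qed.

Lemma powR_comp_meas (R : realType) (d : measure_display) (T : measurableType d)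
  (D : set T) (f : T -> R) a : measurable_fun D f -> measurable_fun D (fun w => f w `^ a).
Proof. move=> mf; exact: (measurableT_comp (measurable_powR a) mf). Qed.

Ltac mt := repeat first
 [ exact: measurable_cst
 | exact: measurable_funP
 | assumption
 | match goal with
   | |- measurable_fun _ (fun w => @?f w * @?g w) =>
       refine (measurable_funM (f:=f) (g:=g) _ _)
   | |- measurable_fun _ (fun w => @?f w + @?g w) =>
       refine (measurable_funD (f:=f) (g:=g) _ _)
   | |- measurable_fun _ (fun w => - @?f w) =>
       refine (measurable_funN (f:=f) _)
   | |- measurable_fun _ (fun w => (@?f w)^-1) =>
       refine (@inv_comp_meas _ _ _ _ f _)
   | |- measurable_fun _ (fun w => Num.sqrt (@?f w)) =>
       refine (@sqrt_comp_meas _ _ _ _ f _)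
   | |- measurable_fun _ (fun w => (@?f w) `^ ?a) =>
       refine (@powR_comp_meas _ _ _ _ f a _)
   | |- measurable_fun _ (fun w => (@?f w) ^+ ?n) =>
       refine (measurable_funX (f:=f) n _)
   | |- measurable_fun _ (fun w => ~~ @?f w) =>
       refine (measurable_neg (f:=f) _)
   | |- measurable_fun _ (fun w => @?f w || @?g w) =>
       refine (measurable_or (f:=f) (g:=g) _ _)
   | |- measurable_fun _ (fun w => @?f w && @?g w) =>
       refine (measurable_and (f:=f) (g:=g) _ _)
   | |- measurable_fun _ (fun w => @?f w <= @?g w) =>
       refine (measurable_fun_ler (f:=f) (g:=g) _ _)
   | |- measurable_fun _ (fun w => @?f w < @?g w) =>
       refine (measurable_fun_ltr (f:=f) (g:=g) _ _)
   | |- measurable_fun _ (fun w => Num.min (@?f w) (@?g w)) =>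
       refine (measurable_minr (f:=f) (g:=g) _ _)
   end ].

Section meas.
Context (R : realType) (d : measure_display) (T : measurableType d).

Lemma gain_meas (alpha : R) (f g : T -> R) : measurable_fun setT f ->
  measurable_fun setT g -> measurable_fun setT (fun w => gain alpha (f w) (g w)).
Proof. move=> mf mg; rewrite /gain; mt. Qed.

Lemma dist_meas (p q : T -> R * R) :
  measurable_fun setT (fun w => (p w).1) -> measurable_fun setT (fun w => (p w).2) ->
  measurable_fun setT (fun w => (q w).1) -> measurable_fun setT (fun w => (q w).2) ->
  measurable_fun setT (fun w => dist2 (p w) (q w)).
Proof. move=> m1 m2 m3 m4; rewrite /dist2; mt. Qed.

Lemma okb_meas (rho a1 a2 varpi th1 th2 : R) (x y1 y2 z : T -> R) :
  measurable_fun setT x -> measurable_fun setT y1 ->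
  measurable_fun setT y2 -> measurable_fun setT z ->
  measurable_fun setT (fun w => okb rho a1 a2 varpi th1 th2 (x w) (y1 w) (y2 w) (z w)).
Proof. move=> m1 m2 m3 m4; rewrite /okb /g_D2_R /g_D2_D1 /g_D2 /g_D1_R /g_D1; mt. Qed.

Lemma bool_set_meas (b : T -> bool) : measurable_fun setT b ->
  measurable [set w | b w].
Proof.
move=> mb; have := mb measurableT [set true] I.
by rewrite setTI preimage_true.
Qed.
End meas.

Arguments outage_iff {R K rho a1 a2 varpi th1 th2 X Y1 Y2 Z}.

Theorem mainTheorem3 (R : realType) (d : measure_display) (T : measurableType d)
  (P : probability T R) (K : nat) (RD alpha OmegaLI a1 a2 RD1 RD2 : R)
  (u1 u2 : R * R)
  (px py gSR gRD1 gRD2 Z : 'I_K -> {RV P >-> R}) :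
  (1 <= K)%N -> 0 < RD -> 0 < alpha -> 0 < OmegaLI ->
  0 < RD1 -> 0 < RD2 ->
  0 < dist2 (0, 0) u1 -> 0 < dist2 (0, 0) u2 ->
  0 < a1 -> a1 < a2 -> a1 + a2 = 1 ->
  a1 * (2 `^ RD2 - 1) < a2 ->
  (forall i, uniform_disc P RD (px i) (py i)) ->
  (forall i, exponential_mean P 1 (gSR i)) ->
  (forall i, exponential_mean P 1 (gRD1 i)) ->
  (forall i, exponential_mean P 1 (gRD2 i)) ->
  (forall i, exponential_mean P OmegaLI (Z i)) ->
  indep_classes P (fun j : 'I_K * 'I_5 =>
    match nat_of_ord j.2 with
    | 0 => events_of2 (px j.1) (py j.1)
    | 1 => events_of (gSR j.1)
    | 2 => events_of (gRD1 j.1)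
    | 3 => events_of (gRD2 j.1)
    | _ => events_of (Z j.1)
    end) ->
  let P_TRS_FD := fun rho : R =>
    fine (P [set w | TRS_outage rho a1 a2 1 (2 `^ RD1 - 1) (2 `^ RD2 - 1)
      (fun i => gain alpha (gSR i w) (dist2 (0, 0) (px i w, py i w)))
      (fun i => gain alpha (gRD1 i w) (dist2 (px i w, py i w) u1))
      (fun i => gain alpha (gRD2 i w) (dist2 (px i w, py i w) u2))
      (fun i => Z i w)]) in
  (fun rho => - (ln (P_TRS_FD rho) / ln rho)) x @[x --> +oo] --> 0.
Proof.
move=> K1 RD0 al0 Om0 RD10 RD20 du1 du2 a10 a12 a1a2 hth2 hunif hSR hRD1 hRD2 hZ hind P_TRS_FD.
have a20 : 0 < a2 by apply: lt_trans a12.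
have powgt1 (r : R) : 0 < r -> 1 < 2 `^ r.
  move=> r0; have := @gt0_ltr_powR R r r0 1 2.
  rewrite powR1 => h; apply: h; rewrite ?nnegrE ?ler01 ?ler0n //.
  by rewrite ltr1n.
have th10 : 0 < 2 `^ RD1 - 1 by rewrite subr_gt0 powgt1.
have th20 : 0 < 2 `^ RD2 - 1 by rewrite subr_gt0 powgt1.
set th1 := 2 `^ RD1 - 1 in th10 P_TRS_FD *.
set th2 := 2 `^ RD2 - 1 in th20 P_TRS_FD *.
pose c := a2 / th2.
have c0 : 0 < c by rewrite divr_gt0.
pose A (j : 'I_K * 'I_5) : set T :=
  match nat_of_ord j.2 with
  | 1 => gSR j.1 @^-1` `]0, 1]%classic
  | 4 => Z j.1 @^-1` `]c, +oo[%classic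
  | _ => setT
  end.
have mA j : measurable (A j).
  case: j => i [[|[|[|[|[|k]]]]] hk]; rewrite /A /=; try exact: measurableT.
  - exact: measurable_funPTI.
  - exact: measurable_funPTI.
have hE : forall j, (match nat_of_ord j.2 with
    | 0 => events_of2 (px j.1) (py j.1)
    | 1 => events_of (gSR j.1)
    | 2 => events_of (gRD1 j.1)
    | 3 => events_of (gRD2 j.1)
    | _ => events_of (Z j.1)
    end) (A j).
  case=> i [[|[|[|[|[|k]]]]] hk]; rewrite /A /=.
  - by exists setT => //; exact: measurableT.
  - by exists `]0, 1]%classic => //; exact: measurable_itv.
  - by exists setT => //; exact: measurableT.
  - by exists setT => //; exact: measurableT.
  - by exists `]c, +oo[%classic => //; exact: measurable_itv.
  - by exists setT => //; exact: measurableT.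
have hprod := hind A hE.
have pos : (0 < \prod_(j : 'I_K * 'I_5) P (A j))%E.
  apply: (big_ind (fun x => 0 < x)%E) => //.
    by move=> x y; apply: mule_gt0.
  case=> i [[|[|[|[|[|k]]]]] hk] _; rewrite /A /=; try by rewrite probability_setT lte01.
  - have -> : gSR i @^-1` `]0, 1]%classic = [set w | 0 < gSR i w] `\` [set w | 1 < gSR i w].
      apply/seteqP; split => w /=.
        rewrite in_itv /= => /andP[h1 h2]; split => //.
        by apply/negP; rewrite -leNgt.
      move=> [h1 /negP h2]; rewrite in_itv /= h1 /= leNgt; exact: h2.
    have m0 : measurable [set w | 0 < gSR i w] by apply: bool_set_meas; mt.
    have m1 : measurable [set w | 1 < gSR i w] by apply: bool_set_meas; mt.
    rewrite measureD //; last by apply: (le_lt_trans (probability_le1 _ m0)); exact: ltry.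
    rewrite setIidr; last by move=> w /= h; apply: lt_trans h.
    have e0 : (P : {content set T -> \bar R}) [set w | 0 < gSR i w] =
      (if 0 <= 0 then expR (- 0 / 1) else 1)%:E := hSR i 0.
    have e1 : (P : {content set T -> \bar R}) [set w | 1 < gSR i w] =
      (if 0 <= 1 then expR (- 1 / 1) else 1)%:E := hSR i 1.
    rewrite e0 e1 lexx ler01 -EFinB lte_fin subr_gt0 ltr_expR.
    by rewrite !divr1 oppr0 ltrN10.
  - have -> : Z i @^-1` `]c, +oo[%classic = [set w | c < Z i w].
      by apply/seteqP; split => w /=; rewrite in_itv /= andbT.
    by rewrite hZ (ltW c0) lte_fin expR_gt0.
set F := \bigcap_(j in [set: 'I_K * 'I_5]) A j.
have mF : measurable F.
  by apply: fin_bigcap_measurable => // j _; exact: mA.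
have [r r0 Pr] : exists2 r : R, 0 < r & P F = r%:E.
  move: pos (probability_le1 P mF); rewrite -hprod.
  by case: (P F) => [r||] //= r0 _; exists r; rewrite ?lte_fin in r0.
have key : forall rho, 0 < rho -> r <= P_TRS_FD rho <= 1.
  move=> rho rho0; rewrite /P_TRS_FD; set O := (X in fine (P X)).
  have Oeq : O = \bigcap_(i in [set: 'I_K]) [set w | okb rho a1 a2 1 th1 th2
      (gain alpha (gSR i w) (dist2 (0, 0) (px i w, py i w)))
      (gain alpha (gRD1 i w) (dist2 (px i w, py i w) u1))
      (gain alpha (gRD2 i w) (dist2 (px i w, py i w) u2)) (Z i w)].
    rewrite /O; apply/seteqP; split => w /=.
    - by move/(outage_iff th10) => H i _; exact: H i.
    - by move=> H; apply/(outage_iff th10) => i; exact: H i I.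
  have mO : measurable O.
    rewrite Oeq; apply: fin_bigcap_measurable => //.
    move=> i _; apply: bool_set_meas; apply: okb_meas; try exact: measurable_funP;
      apply: gain_meas; try exact: measurable_funP;
      apply: dist_meas => /=; mt.
  have FsubO : F `<=` O.
    move=> w Fw; rewrite /O /=; apply/(outage_iff th10) => i.
    have h1 := Fw (i, Ordinal (isT : (1 < 5)%N)) I.
    have h4 := Fw (i, Ordinal (isT : (4 < 5)%N)) I.
    rewrite /A /= in_itv /= in h1; rewrite /A /= in_itv /= andbT in h4.
    move/andP: h1 => [g0 g1].
    rewrite /okb; apply/orP; left; apply/negP => /and3P [hh _ _]; move: hh.
    rewrite leNgt => /negP; apply.
    set X := gain alpha (gSR i w) _.
    have [X0 X1] : 0 < X /\ X <= 1.
      rewrite /X /gain; set D := (1 + _).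
      have D1 : 1 <= D by rewrite /D lerDl powR_ge0.
      have D0 : 0 < D by apply: lt_le_trans D1.
      split; first by rewrite divr_gt0.
      by rewrite ler_pdivrMr // mul1r; exact: le_trans g1 D1.
    have hz : a2 < th2 * Z i w.
      by move: h4; rewrite /c ltr_pdivrMr // mulrC.
    have Zp : 0 < Z i w by apply: lt_trans h4.
    have p1 : 0 < rho * X * a1 by rewrite mulr_gt0 // mulr_gt0.
    have p2 : 0 < rho * 1 * Z i w by rewrite mulr1 mulr_gt0.
    rewrite /g_D2_R ltr_pdivrMr; last by rewrite addr_gt0 // addr_gt0.
    have q1 : rho * X * a2 <= rho * a2.
      by rewrite -mulrA ler_pM2l // ler_piMl // ltW.
    have q2 : rho * a2 < rho * (th2 * Z i w) by rewrite ltr_pM2l.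
    have q3 : 0 <= th2 * (rho * X * a1) by rewrite mulr_ge0 // ltW.
    nra.
  have h1 := le_measure P (mem_set mF) (mem_set mO) FsubO.
  have h2 := probability_le1 P mO.
  have Pr' : (P : {content set T -> \bar R}) F = r%:E := Pr.
  rewrite Pr' in h1.
  have aux : forall x : \bar R, (r%:E <= x)%E -> (x <= 1)%E -> r <= fine x <= 1.
    by case=> [s||] //=; rewrite !lee_fin => -> ->.
  exact: aux h1 h2.
have r1 : r <= 1 by have /andP[h1 h2] := key 1 ltr01; exact: le_trans h1 h2.
pose M := - ln r.
apply/cvgrPdist_lt => eps eps0.
exists (Num.max 1 (expR (M / eps))); split; first by rewrite num_real.
move=> x; rewrite gt_max => /andP[x1 xe].
have x0 : 0 < x by apply: lt_trans x1.
have lnx : 0 < ln x by apply: ln_gt0.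
have /andP[k1 k2] := key x x0.
have p0 : 0 < P_TRS_FD x by apply: lt_le_trans k1.
have L0 : ln (P_TRS_FD x) <= 0 by apply: ln_le0.
have L1 : - M <= ln (P_TRS_FD x).
  by rewrite /M opprK ler_ln // posrE.
have Mx : M < eps * ln x.
  rewrite -ltr_pdivrMl //.
  have := xe; rewrite -ltr_ln ?posrE ?expR_gt0 // expRK; rewrite mulrC.
  by rewrite [eps^-1 * _]mulrC.
rewrite sub0r opprK ltr_norml; apply/andP; split.
- rewrite ltr_pdivlMr //.
  have : - (eps * ln x) < - M by rewrite ltrN2.
  by rewrite mulNr; move=> h; apply: lt_le_trans h L1.
- by apply: le_lt_trans eps0; rewrite pmulr_lle0 // invr_gt0.
Qed.
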